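(* A ring $R$ is CSNC if and only if (1) $2\in\mathrm{Nil}(R)$, and (2) for every clean element $a\in R$ there exists an integer $k\ge 0$ such that $a^{2^k}-a^{2^{k+1}}\in\mathrm{Nil}(R)$.
   Context: All rings are associative with identity $1$. For a ring $R$, $\mathrm{Id}(R)$, $U(R)$, $\mathrm{Nil}(R)$ denote the sets of idempotents, units and nilpotent elements. An element $a\in R$ is clean if $a=e+u$ for some $e\in\mathrm{Id}(R)$, $u\in U(R)$. An element $a$ is strongly nil-clean if $a=e+q$ with $e\in \mathrm{Id}(R)$, $q\in\mathrm{Nil}(R)$ and $eq=qe$. A ring $R$ is called CSNC if every clean element of $R$ is strongly nil-clean. *)

(* Defs.v *)
From mathcomp Require Import all_boot all_algebra.
Set Implicit Arguments. Unset Strict Implicit. Unset Printing Implicit Defensive.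
Import GRing.Theory.
Local Open Scope ring_scope.

Definition idem (R : pzRingType) (e : R) : Prop := e * e = e.
Definition unit_el (R : pzRingType) (u : R) : Prop :=
  exists v : R, u * v = 1 /\ v * u = 1.
Definition is_nil (R : pzRingType) (q : R) : Prop := exists n : nat, q ^+ n = 0.
Definition clean (R : pzRingType) (a : R) : Prop :=
  exists e u : R, idem e /\ unit_el u /\ a = e + u.
Definition strongly_nil_clean (R : pzRingType) (a : R) : Prop :=
  exists e q : R, idem e /\ is_nil q /\ e * q = q * e /\ a = e + q.
Definition CSNC (R : pzRingType) : Prop :=
  forall a : R, clean a -> strongly_nil_clean a.

(* Main.v *)
From mathcomp Require Import all_boot all_algebra.
From mathcomp Require Import ring zify.
Require Import Defs.
Set Implicit Arguments. Unset Strict Implicit. Unset Printing Implicit Defensive.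
Import GRing.Theory.
Local Open Scope ring_scope.

Definition phi (R : pzRingType) (a : R) (p : {poly int}) : R :=
  \sum_(i < size p) (p`_i)%:~R * a ^+ i.

Lemma phi_wide (R : pzRingType) (a : R) (p : {poly int}) n :
  (size p <= n)%N -> phi a p = \sum_(i < n) (p`_i)%:~R * a ^+ i.
Proof.
move=> H; rewrite /phi (big_ord_widen n (fun i => (p`_i)%:~R * a ^+ i) H) big_mkcond /=.
apply: eq_bigr => i _; case: ifP => // /negbT; rewrite -leqNgt => Hi.
by rewrite nth_default // mulr0z mul0r.
Qed.

Lemma phiD (R : pzRingType) (a : R) p q : phi a (p + q) = phi a p + phi a q.
Proof.
have Hn : (size (p + q)%R <= size p + size q)%N.
  apply: leq_trans (size_polyD _ _) _; rewrite geq_max leq_addr leq_addl //.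
rewrite (phi_wide a Hn) (phi_wide a (leq_addr (size q) (size p)))
  (phi_wide a (leq_addl (size p) (size q))) -big_split /=.
by apply: eq_bigr => i _; rewrite coefD intrD mulrDl.
Qed.

Lemma phiN (R : pzRingType) (a : R) p : phi a (- p) = - phi a p.
Proof.
rewrite (phi_wide a (n := size p)) ?size_polyN // /phi -sumrN.
by apply: eq_bigr => i _; rewrite coefN intrN mulNr.
Qed.

Lemma phiB (R : pzRingType) (a : R) p q : phi a (p - q) = phi a p - phi a q.
Proof. by rewrite phiD phiN. Qed.

Lemma phiC (R : pzRingType) (a : R) c : phi a c%:P = c%:~R.
Proof.
rewrite (phi_wide a (n := 1)) ?size_polyC ?leq_b1 // big_ord1 coefC /=.
by rewrite expr0 mulr1.
Qed.

Lemma phi0 (R : pzRingType) (a : R) : phi a 0 = 0.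
Proof. by rewrite -polyC0 phiC mulr0z. Qed.

Lemma phi1 (R : pzRingType) (a : R) : phi a 1 = 1.
Proof. by rewrite -polyC1 phiC. Qed.

Lemma phiMX (R : pzRingType) (a : R) p : phi a (p * 'X) = phi a p * a.
Proof.
have H : (size (p * 'X)%R <= (size p).+1)%N.
  by apply: leq_trans (size_polyMleq _ _) _; rewrite size_polyX addn2.
rewrite (phi_wide a H) big_ord_recl coefMX /= mulr0z mul0r add0r /phi mulr_suml.
by apply: eq_bigr => i _; rewrite coefMX /= exprSr mulrA.
Qed.

Lemma phiCM (R : pzRingType) (a : R) c p : phi a (c%:P * p) = c%:~R * phi a p.
Proof.
have H : (size (c%:P * p)%R <= size p)%N.
  by rewrite mul_polyC size_scale_leq.
rewrite (phi_wide a H) /phi mulr_sumr.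
by apply: eq_bigr => i _; rewrite coefCM intrM mulrA.
Qed.

Lemma phi_commX (R : pzRingType) (a : R) p : a * phi a p = phi a p * a.
Proof.
rewrite /phi mulr_sumr mulr_suml; apply: eq_bigr => i _.
by rewrite mulrA (commr_int a) -mulrA -exprS exprSr mulrA.
Qed.

Lemma phiM (R : pzRingType) (a : R) p q : phi a (p * q) = phi a p * phi a q.
Proof.
elim/poly_ind: p q => [|p c IH] q; first by rewrite mul0r phi0 mul0r.
rewrite mulrDl !phiD phiCM phiC phiMX -(mulrA p) (mulrC 'X) IH phiMX.
by rewrite -phi_commX mulrDl mulrA.
Qed.

Lemma phiX (R : pzRingType) (a : R) : phi a 'X = a.
Proof. by rewrite -(mul1r 'X) phiMX phi1 mul1r. Qed.

Lemma phiXn (R : pzRingType) (a : R) p n : phi a (p ^+ n) = phi a p ^+ n.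
Proof. by elim: n => [|n IH]; rewrite ?expr0 ?phi1 // !exprS phiM IH. Qed.

Lemma phi_comm (R : pzRingType) (a : R) p q : phi a p * phi a q = phi a q * phi a p.
Proof. by rewrite -!phiM mulrC. Qed.

Lemma phi_nat (R : pzRingType) (a : R) n : phi a n%:R = n%:R.
Proof. by rewrite -polyC_natr phiC mulrz_nat. Qed.

Lemma nil_pow0 (R : pzRingType) (x : R) n m : x ^+ n = 0 -> (n <= m)%N -> x ^+ m = 0.
Proof. by move=> H /subnKC <-; rewrite exprD H mul0r. Qed.

Lemma nil_add (R : pzRingType) (x y : R) :
  GRing.comm x y -> is_nil x -> is_nil y -> is_nil (x + y).
Proof.
move=> C [n Hn] [m Hm]; exists (n + m)%N; rewrite exprDn_comm //.
apply: big1 => [[i Hi]] _ /=.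
case: (leqP m i) => H.
  by rewrite (nil_pow0 Hm H) mulr0 mul0rn.
have H2 : (n <= n + m - i)%N by lia.
by rewrite (nil_pow0 Hn H2) mul0r mul0rn.
Qed.

Lemma nil_mul (R : pzRingType) (x y : R) :
  GRing.comm x y -> is_nil x -> is_nil (x * y).
Proof. by move=> C [n Hn]; exists n; rewrite exprMn_comm // Hn mul0r. Qed.

Definition Np (R : pzRingType) (a : R) p := is_nil (phi a p).

Lemma Np0 (R : pzRingType) (a : R) : Np a 0.
Proof. by exists 1%N; rewrite phi0 expr1. Qed.

Lemma Np_add (R : pzRingType) (a : R) p q : Np a p -> Np a q -> Np a (p + q).
Proof. by move=> Hp Hq; rewrite /Np phiD; apply: nil_add => //; apply: phi_comm. Qed.

Lemma Np_mul (R : pzRingType) (a : R) p q : Np a p -> Np a (p * q).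
Proof. by move=> Hp; rewrite /Np phiM; apply: nil_mul => //; apply: phi_comm. Qed.

Lemma Np_mulr (R : pzRingType) (a : R) p q : Np a q -> Np a (p * q).
Proof. by rewrite mulrC; apply: Np_mul. Qed.

Lemma Np_opp (R : pzRingType) (a : R) p : Np a p -> Np a (- p).
Proof. by move=> H; rewrite -mulrN1; apply: Np_mul. Qed.

Lemma Np_2 (R : pzRingType) (a : R) q : is_nil (2 : R) -> Np a (2 * q).
Proof.
move=> H; rewrite /Np phiM (phi_nat a 2); apply: nil_mul => //.
exact/esym/commr_nat.
Qed.

Lemma Np_pow (R : pzRingType) (a : R) p m : Np a (p ^+ m) -> Np a p.
Proof. by rewrite /Np phiXn => -[n Hn]; exists (m * n)%N; rewrite exprM. Qed.

Lemma Np_eq (R : pzRingType) (a : R) p q : p = q -> Np a p -> Np a q.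
Proof. by move=> ->. Qed.

Lemma frob (R : pzRingType) (a : R) : is_nil (2 : R) -> forall n (p q : {poly int}),
  Np a ((p - q) ^+ (2 ^ n) - (p ^+ (2 ^ n) - q ^+ (2 ^ n))).
Proof.
move=> N2; elim=> [|n IH] p q; first by rewrite !expn0 !expr1 subrr; apply: Np0.
rewrite expnS mulnC !exprM.
set u := (p - q) ^+ (2 ^ n); set P := p ^+ (2 ^ n); set Q := q ^+ (2 ^ n).
apply: (@Np_eq _ _ ((u - (P - Q)) * (u + (P - Q)) + 2 * (Q ^+ 2 - P * Q))).
  by ring.
apply: Np_add; [apply: Np_mul; exact: IH | exact: Np_2].
Qed.

Lemma newton (R : pzRingType) (a : R) : forall j (p : {poly int}),
  phi a ((p - p ^+ 2) ^+ (2 ^ j)) = 0 ->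
  exists e, idem (phi a e) /\ Np a (p - e).
Proof.
elim=> [|j IH] p H.
  exists p; split; last by rewrite subrr; apply: Np0.
  move: H; rewrite expn0 expr1 phiB phiXn => /eqP; rewrite subr_eq0 => /eqP E.
  by rewrite /idem -expr2 -E.
set p' := 3 * p ^+ 2 - 2 * p ^+ 3.
have E : p' - p' ^+ 2 = (p - p ^+ 2) ^+ 2 * (3 + 4 * (p - p ^+ 2)) by rewrite /p'; ring.
have H' : phi a ((p' - p' ^+ 2) ^+ (2 ^ j)) = 0.
  by rewrite E exprMn -exprM -expnS phiM H mul0r.
have [e [He Ne]] := IH p' H'.
exists e; split => //.
apply: (@Np_eq _ _ ((p' - e) + (p - p ^+ 2) * (1 - 2 * p))); first by rewrite /p'; ring.
apply: Np_add => //; apply: Np_mul; apply: (@Np_pow _ _ _ (2 ^ j.+1)).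
by exists 1%N; rewrite expr1.
Qed.

Lemma fwd_nil2 (R : pzRingType) : CSNC R -> is_nil (2 : R).
Proof.
move=> H.
have Hc : clean (-1 : R).
  exists 0, (-1); split; first by rewrite /idem mul0r.
  by split; [exists (-1); rewrite mulrNN mulr1 | rewrite add0r].
have [e [q [He [[n Hn] [Hcm Heq]]]]] := H _ Hc.
have Hq : q = -1 - e by rewrite Heq addrC addKr.
set f := 1 - e.
have Hf0 : f * (1 + q) = 0.
  rewrite Hq addrA subrr add0r /f mulrN mulrBl mul1r He subrr oppr0 //.
have Hf1 : f * (- q) = f.
  move: Hf0; rewrite mulrDr mulr1 => /eqP; rewrite addr_eq0 => /eqP E.
  by rewrite mulrN -E.
have Hfm : forall m, f * (- q) ^+ m = f.
  elim=> [|m IH]; first by rewrite expr0 mulr1.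
  by rewrite exprSr mulrA IH Hf1.
have Hf : f = 0 by rewrite -(Hfm n) exprNn Hn mulr0 mulr0.
have E1 : e = 1 by apply/esym/eqP; rewrite -subr_eq0 -/f Hf.
exists n; have -> : (2 : R) = - q by rewrite Hq E1 opprB opprK mulr2n.
by rewrite exprNn Hn mulr0.
Qed.

Lemma fwd_sq (R : pzRingType) (a : R) : strongly_nil_clean a -> is_nil (a - a ^+ 2).
Proof.
move=> [e [q [He [Nq [Hc Ha]]]]].
have -> : a - a ^+ 2 = q * (1 - e - e - q).
  rewrite Ha expr2 !mulrDl !mulrDr He -Hc !mulrN mulr1 -Hc.
  set x := e * q; set y := q * q.
  by rewrite !opprD !addrA [e + q]addrC addrK.
by apply: nil_mul => //; rewrite /GRing.comm !mulrBr !mulrBl mulr1 mul1r Hc.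
Qed.

Unset Implicit Arguments.

Theorem corollary2p11 (R : pzRingType) :
  CSNC R <->
  (is_nil (2 : R) /\
   forall a : R, clean a ->
     exists k : nat, is_nil (a ^+ (2 ^ k)%N - a ^+ (2 ^ k.+1)%N)).
Proof.
split.
  move=> H; split; first exact: fwd_nil2.
  move=> a Ha; exists 0%N; rewrite expn0 expn1 expr1.
  exact: fwd_sq (H a Ha).
move=> [N2 H2] a Ha.
have [k Hk] := H2 a Ha.
have NX : Np a ('X ^+ (2 ^ k) - 'X ^+ (2 ^ k.+1)) by rewrite /Np phiB !phiXn phiX.
have E2 : ('X ^+ 2) ^+ (2 ^ k) = 'X ^+ (2 ^ k.+1) :> {poly int}
  by rewrite -exprM -expnS.
have N1 : Np a (('X - 'X ^+ 2) ^+ (2 ^ k)).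
  apply: (@Np_eq _ _ ((('X - 'X ^+ 2) ^+ (2 ^ k) - ('X ^+ (2 ^ k) - ('X ^+ 2) ^+ (2 ^ k)))
     + ('X ^+ (2 ^ k) - 'X ^+ (2 ^ k.+1)))); first by rewrite E2 subrK.
  by apply: Np_add => //; apply: frob.
have [n Hn] := Np_pow N1.
have Hz : phi a (('X - 'X ^+ 2) ^+ (2 ^ n)) = 0.
  by rewrite phiXn (nil_pow0 Hn) // ltnW // ltn_expl.
have [e [He Ne]] := newton Hz.
have Ee : phi a ('X - e) = a - phi a e by rewrite phiB phiX.
exists (phi a e), (a - phi a e); split => //; split; first by rewrite -Ee.
split; first by rewrite -Ee phi_comm.
by rewrite addrC subrK.
Qed.
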